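(* Consider a two-player perfect-information game with exact Enforceable Payoff Frontiers $U_s$, minimum required incentives $\tau$, truncation thresholds $\beta$ and bounds $\underline V,\overline V$ as defined in the context. Let $\{\tilde U_s\}_{s\in\mathcal S}$ be any family of learned EPFs as in the context, and let $\tilde\pi$ be the strategy induced by $\{\tilde U_s\}$. Then $\tilde\pi$ is incentive compatible in the following sense. Let $s\in\mathcal S_2$ be a follower state reached with some promise, and let $a\in\mathcal A(s)$ be an action that $\tilde\pi$ recommends at $s$ with positive probability, carrying promise $\mu'$ to the child $T(a;s)$. Then the follower's expected payoff from $T(a;s)$ onward when play continues according to $\tilde\pi$ with promise $\mu'$ is at least $\tau(T(a;s))$.
   Context: A two-player perfect-information game is a finite rooted tree whose vertices are the states $s\in\mathcal S$. The leaves $\mathcal L\subseteq\mathcal S$ carry payoffs $r_1(\ell),r_2(\ell)\in\mathbb R$ for player $\mathsf P_1$ (the leader) and player $\mathsf P_2$ (the follower). Every non-leaf state belongs to exactly one of $\mathcal S_1$ (leader states) or $\mathcal S_2$ (follower states). The actions $\mathcal A(s)$ at $s$ are the edges from $s$ to its children; $\mathcal C(s)$ is the set of children and $T(a;s)$ is the child reached by action $a$. Define $\underline V,\overline V:\mathcal S\to\mathbb R$ by backward induction (they are the follower's payoffs under the leader's grim strategy and under the joint altruistic strategy): - for a leaf $\ell$: $\underline V(\ell)=\overline V(\ell)=r_2(\ell)$; - for $s\in\mathcal S_1$: $\underline V(s)=\min_{s'\in\mathcal C(s)}\underline V(s')$; - for $s\in\mathcal S_2$: $\underline V(s)=\max_{s'\in\mathcal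 C(s)}\underline V(s')$; - for every non-leaf $s$: $\overline V(s)=\max_{s'\in\mathcal C(s)}\overline V(s')$. For $s\in\mathcal S_2$ and $s'\in\mathcal C(s)$, the minimum required incentive is $\tau(s')=\max_{s^!\in\mathcal C(s),\,s^!\neq s'}\underline V(s^!)$. Let $\beta(s')=\tau(s')$ if the parent of $s'$ lies in $\mathcal S_2$, and $\beta(s')=-\infty$ if the parent lies in $\mathcal S_1$. For functions $g:\mathbb R\to\mathbb R\cup\{-\infty\}$: - the upper concave envelope $\bigwedge_i g_i$ of finitely many such functions is the pointwise infimum of all concave $h$ with $h\ge\max_i g_i$; - the left truncation is $[g\triangleright t](\mu)=g(\mu)$ if $\mu\ge t$ and $-\infty$ otherwise (so $g\triangleright(-\infty)=g$). Exact EPFs: for a leaf $\ell$, $U_\ell(\mu)=r_1(\ell)$ if $\mu=r_2(\ell)$ and $-\infty$ otherwise; for a non-leaf $s$, $U_s=\bigwedge_{s'\in\mathcal C(s)}(U_{s'}\triangleright\beta(s'))$. Learned EPFs: a family $\{\tilde U_s\}_{s\in\mathcal S}$ with $\tilde U_\ell=U_\ell$ for leaves. For each non-leaf $s$, $\tilde U_s$ is a piecewise linear function, given as the linear interpolation of finitely many points whose $x$-coordinates lie in $[\underline V(s),\overline V(s)]$ and include both endpoints. It is real-valued on $[\underline V(s),\overline V(s)]$ and equal to $-\infty$ outside this interval. Induced strategy $\tilde\pi$: play starts at the root with promise $\mu_{\mathrm{root}}\in\arg\max_\mu\tilde U_{\mathrm{root}}(\mu)$. At a non-leaf state $s$ reached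 with promise $\mu$, choose a maximizer $(s',s'',t,\mu',\mu'')$, subject to $s',s''\in\mathcal C(s)$, $t\in[0,1]$ and $t\mu'+(1-t)\mu''=\mu$, of $$t\,[\tilde U_{s'}\triangleright\beta(s')](\mu')+(1-t)\,[\tilde U_{s''}\triangleright\beta(s'')](\mu'').$$ Then move to $s'$ with probability $t$ carrying promise $\mu'$, and to $s''$ with probability $1-t$ carrying promise $\mu''$. At leader states this is the leader's mixed action; at follower states it is the action the leader recommends to the follower, who follows recommendations. *)

(* Defs.v *)
From HB Require Import structures.
From mathcomp Require Import all_boot all_order all_algebra.
From mathcomp Require Import reals constructive_ereal.

Set Implicit Arguments.
Unset Strict Implicit.
Unset Printing Implicit Defensive.

Import Order.TTheory GRing.Theory Num.Theory.
Local Open Scope ring_scope.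
Local Open Scope ereal_scope.

(* A finite two-player perfect-information game tree.
   [Leaf r1 r2] : a leaf with payoffs r1 (leader P1) and r2 (follower P2).
   [Node b c cs] : a non-leaf state with (nonempty) list of children c :: cs;
   b = true means the state is a leader state (S_1), b = false a follower
   state (S_2).  Action k at a node leads to its k-th child.
   States of a game G are identified with their addresses (seq nat, the list
   of child indices from the root). *)
Inductive game (R : Type) : Type :=
| Leaf of R & R
| Node of bool & game R & seq (game R).

Section Game.
Variable R : realType.

Definition children (g : game R) : seq (game R) :=
  if g is Node _ c cs then c :: cs else [::].

Definition is_leaf (g : game R) : bool := if g is Leaf _ _ then true else false.

Fixpoint subgame (g : game R) (p : seq nat) : option (game R) :=
  match p with
  | [::] => Some g
  | i :: p' => if (i < size (children g))%N
               then subgame (nth g (children g) i) p' else None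
  end.

Fixpoint lowV (g : game R) : R :=
  match g with
  | Leaf _ r2 => r2
  | Node b c cs =>
      if b then foldr Num.min (lowV c) (map lowV cs)
      else foldr Num.max (lowV c) (map lowV cs)
  end.

Fixpoint upV (g : game R) : R :=
  match g with
  | Leaf _ r2 => r2
  | Node _ c cs => foldr Num.max (upV c) (map upV cs)
  end.

Definition tau_ch (g : game R) (i : nat) : \bar R :=
  let sib := take i (children g) ++ drop i.+1 (children g) in
  foldr (fun x acc => Order.max x acc) -oo [seq (lowV h)%:E | h <- sib].

Definition beta_ch (g : game R) (i : nat) : \bar R :=
  if g is Node false _ _ then tau_ch g i else -oo.

Definition trunc (f : R -> \bar R) (t : \bar R) (mu : R) : \bar R :=
  if t <= mu%:E then f mu else -oo.

Definition leafU (r1 r2 : R) (mu : R) : \bar R :=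
  if mu == r2 then r1%:E else -oo.

Definition is_pl_interp (lo hi : R) (f : R -> \bar R) : Prop :=
  exists xs ys : seq R,
    [/\ size xs = size ys, (0 < size xs)%N, sorted <%R xs,
        head 0%R xs = lo & last 0%R xs = hi] /\
    [/\ (forall mu, (mu < lo)%R \/ (hi < mu)%R -> f mu = -oo),
        (forall k, (k < size xs)%N -> f xs`_k = (ys`_k)%:E) &
        (forall k mu, (k.+1 < size xs)%N -> (xs`_k <= mu <= xs`_k.+1)%R ->
           f mu = (ys`_k + (mu - xs`_k) / (xs`_k.+1 - xs`_k)
                            * (ys`_k.+1 - ys`_k))%:E)].

Definition learned_epfs (G : game R) (Ut : seq nat -> R -> \bar R) : Prop :=
  forall p g, subgame G p = Some g ->
    match g with
    | Leaf r1 r2 => forall mu, Ut p mu = leafU r1 r2 mu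
    | Node _ _ _ => is_pl_interp (lowV g) (upV g) (Ut p)
    end.

(* a choice (s', s'', t, mu', mu'') at a state: child indices ci, cj,
   probability ct of going to ci, promises cmu1, cmu2 *)
Record choice := Choice { ci : nat; cj : nat; ct : R; cmu1 : R; cmu2 : R }.

Definition admissible (g : game R) (mu : R) (c : choice) : Prop :=
  [/\ (ci c < size (children g))%N, (cj c < size (children g))%N,
      (0 <= ct c <= 1)%R & (ct c * cmu1 c + (1 - ct c) * cmu2 c = mu)%R].

(* t [Ut_{s'} |> beta(s')](mu') + (1-t) [Ut_{s''} |> beta(s'')](mu'')
   (with the extended-real convention 0 * -oo = 0) *)
Definition objective (Ut : seq nat -> R -> \bar R) (p : seq nat) (g : game R)
    (c : choice) : \bar R :=
  (ct c)%:E * trunc (Ut (rcons p (ci c))) (beta_ch g (ci c)) (cmu1 c)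
  + (1 - ct c)%:E * trunc (Ut (rcons p (cj c))) (beta_ch g (cj c)) (cmu2 c).

Definition is_maximizer (Ut : seq nat -> R -> \bar R) (p : seq nat)
    (g : game R) (mu : R) (c : choice) : Prop :=
  admissible g mu c /\
  forall c', admissible g mu c' -> objective Ut p g c' <= objective Ut p g c.

(* A strategy of the promise-based form: root promise mu0 and, at each
   state (address p) reached with promise mu, the choice sigma p mu. *)
Inductive reached (G : game R) (sigma : seq nat -> R -> choice) (mu0 : R)
  : seq nat -> R -> Prop :=
| reached_root : reached G sigma mu0 [::] mu0
| reached_l p mu g : reached G sigma mu0 p mu -> subgame G p = Some g ->
    ~~ is_leaf g -> (0 < ct (sigma p mu))%R ->
    reached G sigma mu0 (rcons p (ci (sigma p mu))) (cmu1 (sigma p mu))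
| reached_r p mu g : reached G sigma mu0 p mu -> subgame G p = Some g ->
    ~~ is_leaf g -> (ct (sigma p mu) < 1)%R ->
    reached G sigma mu0 (rcons p (cj (sigma p mu))) (cmu2 (sigma p mu)).

Definition induced_strategy (G : game R) (Ut : seq nat -> R -> \bar R)
    (mu0 : R) (sigma : seq nat -> R -> choice) : Prop :=
  (forall mu, Ut [::] mu <= Ut [::] mu0) /\
  (forall p mu g, reached G sigma mu0 p mu -> subgame G p = Some g ->
     ~~ is_leaf g -> is_maximizer Ut p g mu (sigma p mu)).

Definition recommends (c : choice) (a : nat) (mu' : R) : Prop :=
  [/\ a = ci c, (0 < ct c)%R & mu' = cmu1 c] \/
  [/\ a = cj c, (ct c < 1)%R & mu' = cmu2 c].

Fixpoint fpay (sigma : seq nat -> R -> choice) (g : game R) (p : seq nat)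
    (mu : R) {struct g} : R :=
  match g with
  | Leaf _ r2 => r2
  | Node _ c cs =>
      let fix go (k : nat) (l : seq (game R)) : seq (R -> R) :=
        match l with
        | [::] => [::]
        | h :: l' => (fun m => fpay sigma h (rcons p k) m) :: go k.+1 l'
        end in
      let fs := (fun m => fpay sigma c (rcons p 0%N) m) :: go 1%N cs in
      let ch := sigma p mu in
      (ct ch * nth (fun _ => 0%R) fs (ci ch) (cmu1 ch)
       + (1 - ct ch) * nth (fun _ => 0%R) fs (cj ch) (cmu2 ch))%R
  end.

End Game.

(* Main.v *)
Require Import Defs.
From HB Require Import structures.
From mathcomp Require Import all_boot all_order all_algebra.
From mathcomp Require Import reals constructive_ereal.
From mathcomp Require Import ring lra.
Import Order.TTheory GRing.Theory Num.Theory.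
Local Open Scope ring_scope.
Local Open Scope ereal_scope.


Definition gol {R : realType} (sigma : seq nat -> R -> choice R) (p : seq nat) :=
  fix go (k : nat) (l : seq (game R)) : seq (R -> R) :=
  match l with
  | [::] => [::]
  | h :: l' => (fun m => fpay sigma h (rcons p k) m) :: go k.+1 l'
  end.

Lemma fpay_node {R : realType} (sigma : seq nat -> R -> choice R) b c cs p mu :
  fpay sigma (Node b c cs) p mu =
  (ct (sigma p mu) * nth (fun _ => 0%R)
      ((fun m => fpay sigma c (rcons p 0%N) m) :: gol sigma p 1 cs)
      (ci (sigma p mu)) (cmu1 (sigma p mu))
   + (1 - ct (sigma p mu)) * nth (fun _ => 0%R)
      ((fun m => fpay sigma c (rcons p 0%N) m) :: gol sigma p 1 cs)
      (cj (sigma p mu)) (cmu2 (sigma p mu)))%R.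
Proof. reflexivity. Qed.

Lemma nth_gol {R : realType} (sigma : seq nat -> R -> choice R) p l : forall k i d x, (i < size l)%N ->
  nth d (gol sigma p k l) i = (fun m => fpay sigma (nth x l i) (rcons p (k + i)%N) m).
Proof.
elim: l => [|h l IH] k i d x //= Hi.
case: i Hi => [|i] Hi /=; first by rewrite addn0.
by rewrite (IH _ _ _ x) // addSnnS.
Qed.

Lemma nth_fs {R : realType} (sigma : seq nat -> R -> choice R) p c cs k m : (k < size (c :: cs))%N ->
  nth (fun _ => 0%R) ((fun m => fpay sigma c (rcons p 0%N) m) :: gol sigma p 1 cs) k m
  = fpay sigma (nth c (c :: cs) k) (rcons p k) m.
Proof.
case: k => [|k] //= Hk.
by rewrite (nth_gol _ _ _ _ _ _ c).
Qed.

Fixpoint game_ind' {R : realType} (P : game R -> Prop)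
  (HL : forall a b, P (Leaf a b))
  (HN : forall b c cs, P c -> foldr (fun h acc => P h /\ acc) True cs -> P (Node b c cs))
  (g : game R) {struct g} : P g :=
  match g with
  | Leaf a b => HL a b
  | Node b c cs => HN b c cs (game_ind' P HL HN c)
      ((fix G (l : seq (game R)) : foldr (fun h acc => P h /\ acc) True l :=
         match l with
         | [::] => I
         | h :: l' => conj (game_ind' P HL HN h) (G l')
         end) cs)
  end.

Lemma foldr_conj_nth {R : realType} (P : game R -> Prop) c cs :
  P c -> foldr (fun h acc => P h /\ acc) True cs ->
  forall k, (k < size (c :: cs))%N -> P (nth c (c :: cs) k).
Proof.
move=> Pc; elim: cs c Pc => [|h l IH] c Pc /=; first by move=> _ [|k].
move=> [Ph Pl] [|k] //= Hk.
have := IH h Ph Pl k Hk. by rewrite (set_nth_default h).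
Qed.

Lemma subgame_rcons {R : realType} (G : game R) p k :
  subgame G (rcons p k) =
  match subgame G p with
  | Some g => if (k < size (children g))%N then Some (nth g (children g) k) else None
  | None => None
  end.
Proof.
elim: p G => [|i p IH] G /=.
  by case: ifP.
by case: ifP.
Qed.



Lemma maxmem {R : realType} (x : R) s : foldr Num.max x s \in x :: s.
Proof.
elim: s => [|y s IH] /=; first by rewrite mem_seq1.
rewrite !inE; case: (leP y (foldr Num.max x s)) => Hy.
  by move: IH; rewrite inE => /orP[->|->]; rewrite ?orbT.
by rewrite eqxx orbT.
Qed.

Lemma maxge {R : realType} (x y : R) s : y \in x :: s -> (y <= foldr Num.max x s)%R.
Proof.
elim: s => [|z s IH] /= Hy; first by move: Hy; rewrite mem_seq1 => /eqP->.
rewrite le_max; move: Hy; rewrite !inE => /or3P[H|H|H].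
- by rewrite IH ?orbT // inE H.
- by rewrite (eqP H) lexx.
- by rewrite IH ?orbT // inE H orbT.
Qed.

Lemma minmem {R : realType} (x : R) s : foldr Num.min x s \in x :: s.
Proof.
elim: s => [|y s IH] /=; first by rewrite mem_seq1.
rewrite !inE; case: (leP y (foldr Num.min x s)) => Hy.
  by rewrite eqxx orbT.
by move: IH; rewrite inE => /orP[->|->]; rewrite ?orbT.
Qed.

Lemma foldr_emax_le {R : realType} (s : seq R) (v : R) :
  (forall y, y \in s -> (y <= v)%R) ->
  foldr (fun x acc => Order.max x acc) -oo (map (fun x => x%:E) s) <= v%:E.
Proof.
elim: s => [|y s IH] H /=; first by rewrite leNye.
rewrite ge_max lee_fin H ?inE ?eqxx //= IH // => z Hz.
by rewrite H // inE Hz orbT.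
Qed.

Lemma tau_le {R : realType} (g : game R) i (v : R) :
  (forall y, y \in map (@lowV R) (children g) -> (y <= v)%R) -> tau_ch g i <= v%:E.
Proof.
move=> H; rewrite /tau_ch.
have -> : forall s : seq (game R), [seq (lowV h)%:E | h <- s] = map (fun x => x%:E) (map (@lowV R) s).
  by move=> s; rewrite -map_comp.
apply: foldr_emax_le => y; rewrite map_cat map_take map_drop mem_cat.
by move=> /orP[/mem_take|/mem_drop]; apply: H.
Qed.

Lemma endpoints {R : realType} (G : game R) Ut q h :
  learned_epfs G Ut -> subgame G q = Some h ->
  (exists y, Ut q (lowV h) = y%:E) /\ (exists y, Ut q (upV h) = y%:E).
Proof.
move=> HL Hq; have := HL q h Hq.
case: h Hq => [r1 r2|b c cs] Hq /=.
  by move=> H; rewrite H /leafU eqxx; split; exists r1.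
move=> [xs [ys [[Hsz Hpos Hsort Hhead Hlast] [_ Hk _]]]]; split.
  exists ys`_0; rewrite -Hk //; congr (Ut q _).
  by rewrite -Hhead; case: (xs) Hpos.
exists ys`_(size xs).-1; rewrite -Hk; last by rewrite prednK.
by rewrite nth_last Hlast.
Qed.

Lemma ut_interval {R : realType} (G : game R) Ut q h mu :
  learned_epfs G Ut -> subgame G q = Some h -> Ut q mu != -oo ->
  match h with Leaf _ r2 => mu = r2 | Node _ _ _ => (lowV h <= mu <= upV h)%R end.
Proof.
move=> HL Hq; have := HL q h Hq.
case: h Hq => [r1 r2|b c cs] Hq; cbv beta iota.
  by move=> H; rewrite H /leafU; case: ifP => [/eqP|_] //; rewrite eqxx.
move=> [xs [ys [_ [Hout _ _]]]] Hne.
case: (ltP mu (lowV (Node b c cs))) => H1.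
  by move: Hne; rewrite Hout ?eqxx //; left.
case: (ltP (upV (Node b c cs)) mu) => H2.
  by move: Hne; rewrite Hout ?eqxx //; right.
by apply/andP.
Qed.


Lemma trunc_ne {R : realType} {f : R -> \bar R} {t m} :
  trunc f t m != -oo -> t <= m%:E /\ f m != -oo.
Proof. by rewrite /trunc; case: ifP. Qed.

Lemma child_sub {R : realType} (G : game R) p b c cs k :
  subgame G p = Some (Node b c cs) -> (k < size (c :: cs))%N ->
  subgame G (rcons p k) = Some (nth c (c :: cs) k).
Proof.
move=> Hp Hk; rewrite subgame_rcons Hp /= -/(size (c :: cs)) Hk.
by rewrite (set_nth_default c).
Qed.

Arguments ut_interval {R G Ut q h mu} _ _ _.
Arguments endpoints {R G Ut q h} _ _.
Arguments child_sub {R G p b c cs k} _ _.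

Lemma good_choice {R : realType} {G : game R} {Ut p g mu} :
  learned_epfs G Ut -> subgame G p = Some g -> ~~ is_leaf g -> Ut p mu != -oo ->
  exists c', admissible g mu c' /\ objective Ut p g c' != -oo.
Proof.
move=> HL Hp; case: g Hp => [//|b c cs] Hp _ Hne.
have := ut_interval HL Hp Hne; cbv beta iota.
set lo := lowV (Node b c cs); set hi := upV (Node b c cs) => /andP[Hlo Hhi].
have memlo : lo \in map (@lowV R) (c :: cs).
  rewrite /lo /=; case: (b); [exact: minmem | exact: maxmem].
have memhi : hi \in map (@upV R) (c :: cs) by rewrite /hi /=; exact: maxmem.
have [k1 Hk1 Ek1] := nthP (lowV c) memlo.
have [k2 Hk2 Ek2] := nthP (upV c) memhi.
rewrite size_map in Hk1; rewrite size_map in Hk2.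
rewrite (nth_map c) // in Ek1; rewrite (nth_map c) // in Ek2.
have [[y1 Hy1] _] := endpoints HL (child_sub Hp Hk1).
have [_ [y2 Hy2]] := endpoints HL (child_sub Hp Hk2).
rewrite Ek1 in Hy1; rewrite Ek2 in Hy2.
have Hbeta : forall k, beta_ch (Node b c cs) k <= lo%:E.
  move=> k; rewrite /lo; case: (b) => /=; first exact: leNye.
  apply: tau_le => y Hy; exact: maxge.
pose t := if (lo < hi)%R then ((hi - mu) / (hi - lo))%R else 1%R.
exists (@Defs.Choice R k1 k2 t lo hi); split.
  split => //=; rewrite /t; case: ifP => Hlt.
  - have Hd : (0 < hi - lo)%R by rewrite subr_gt0.
    apply/andP; split.
      by apply: divr_ge0; lra.
    rewrite ler_pdivrMr // mul1r; lra.
  - by rewrite lexx ler01.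
  - have Hd : (hi - lo != 0)%R by rewrite subr_eq0 eq_sym lt_eqF.
    by field.
  - have Hle : (lo = hi)%R.
      by apply/eqP; rewrite eq_le (le_trans Hlo Hhi) /= leNgt Hlt.
    rewrite -Hle in Hhi; have Hm : mu = lo by apply/eqP; rewrite eq_le Hlo Hhi.
    by rewrite Hm subrr mul0r addr0 mul1r.
rewrite /objective /= /trunc Hbeta.
rewrite (le_trans (Hbeta k2)) ?lee_fin; last exact: (le_trans Hlo).
by rewrite Hy1 Hy2 -!EFinM -EFinD.
Qed.


Lemma obj_parts {R : realType} (t : R) x y :
  t%:E * x + (1 - t)%:E * y != -oo ->
  ((0 < t)%R -> x != -oo) /\ ((t < 1)%R -> y != -oo).
Proof.
move=> H; split => Ht; apply/negP => /eqP Hx; move: H; rewrite Hx.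
  by rewrite mulrNy gtr0_sg // mul1e addNye.
by rewrite mulrNy gtr0_sg ?subr_gt0 // mul1e addeNy.
Qed.

Lemma step {R : realType} {G : game R} {Ut p g mu ch} :
  learned_epfs G Ut -> subgame G p = Some g -> ~~ is_leaf g -> Ut p mu != -oo ->
  is_maximizer Ut p g mu ch ->
  ((0 < ct ch)%R -> trunc (Ut (rcons p (ci ch))) (beta_ch g (ci ch)) (cmu1 ch) != -oo) /\
  ((ct ch < 1)%R -> trunc (Ut (rcons p (cj ch))) (beta_ch g (cj ch)) (cmu2 ch) != -oo).
Proof.
move=> HL Hp Hnl Hne [Hadm Hmax].
have [c' [Hadm' Hobj']] := good_choice HL Hp Hnl Hne.
apply: obj_parts.
have := Hmax c' Hadm'; rewrite /objective.
apply: contraTneq => ->; rewrite leeNy_eq; exact: Hobj'.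
Qed.

Lemma inv {R : realType} {G : game R} {Ut mu0 sigma p mu} :
  learned_epfs G Ut -> induced_strategy G Ut mu0 sigma ->
  reached G sigma mu0 p mu ->
  forall g, subgame G p = Some g -> Ut p mu != -oo.
Proof.
move=> HL [Hroot Hind]; elim => [|p' m g Hr IH Hg Hnl Hct|p' m g Hr IH Hg Hnl Hct] h Hh.
- have [[y Hy] _] := endpoints HL (erefl : subgame G [::] = Some G).
  have := Hroot (lowV G); rewrite Hy; apply: contraTneq => ->.
  by rewrite leeNy_eq.
- have [H1 _] := step HL Hg Hnl (IH g Hg) (Hind p' m g Hr Hg Hnl).
  by have [_ ->] := trunc_ne (H1 Hct).
- have [_ H2] := step HL Hg Hnl (IH g Hg) (Hind p' m g Hr Hg Hnl).
  by have [_ ->] := trunc_ne (H2 Hct).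
Qed.

Lemma promise_kept {R : realType} {G : game R} {Ut mu0 sigma} :
  learned_epfs G Ut -> induced_strategy G Ut mu0 sigma ->
  forall g p mu, reached G sigma mu0 p mu -> subgame G p = Some g ->
  fpay sigma g p mu = mu.
Proof.
move=> HL Hs g; elim/(@game_ind' R): g => [r1 r2|b c cs Hc Hcs] p mu Hr Hp.
  have := ut_interval HL Hp (inv HL Hs Hr _ Hp); cbv beta iota => ->.
  by [].
have IH := foldr_conj_nth _ _ _ Hc Hcs.
have Hnl : ~~ is_leaf (Node b c cs) by [].
have [[Hi Hj Ht Heq] _] := Hs.2 p mu _ Hr Hp Hnl.
rewrite fpay_node !nth_fs //.
have E1 : (ct (sigma p mu) * fpay sigma (nth c (c :: cs) (ci (sigma p mu)))
             (rcons p (ci (sigma p mu))) (cmu1 (sigma p mu))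
          = ct (sigma p mu) * cmu1 (sigma p mu))%R.
  have [->|Hpos] := eqVneq (ct (sigma p mu)) 0%R; first by rewrite !mul0r.
  have Hpos' : (0 < ct (sigma p mu))%R by rewrite lt_neqAle eq_sym Hpos; case/andP: Ht.
  by rewrite (IH _ Hi _ _ (reached_l Hr Hp Hnl Hpos') (child_sub Hp Hi)).
have E2 : ((1 - ct (sigma p mu)) * fpay sigma (nth c (c :: cs) (cj (sigma p mu)))
             (rcons p (cj (sigma p mu))) (cmu2 (sigma p mu))
          = (1 - ct (sigma p mu)) * cmu2 (sigma p mu))%R.
  have [->|Hpos] := eqVneq (1 - ct (sigma p mu))%R 0%R; first by rewrite !mul0r.
  have Hlt : (ct (sigma p mu) < 1)%R.
    rewrite lt_neqAle; case/andP: Ht => _ ->; rewrite andbT.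
    by apply: contra Hpos => /eqP ->; rewrite subrr.
  by rewrite (IH _ Hj _ _ (reached_r Hr Hp Hnl Hlt) (child_sub Hp Hj)).
by rewrite E1 E2.
Qed.

Theorem theorem2 (R : realType) (G : game R) (Ut : seq nat -> R -> \bar R)
    (mu0 : R) (sigma : seq nat -> R -> choice R) :
  learned_epfs G Ut ->
  induced_strategy G Ut mu0 sigma ->
  forall (p : seq nat) (mu : R) (c : game R) (cs : seq (game R))
         (a : nat) (mu' : R),
    reached G sigma mu0 p mu ->
    subgame G p = Some (Node false c cs) ->
    recommends (sigma p mu) a mu' ->
    tau_ch (Node false c cs) a
      <= (fpay sigma (nth c (c :: cs) a) (rcons p a) mu')%:E.
Proof.
move=> HL Hs p mu c cs a mu' Hr Hp Hrec.
have Hnl : ~~ is_leaf (Node false c cs) by [].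
have Hmax := Hs.2 p mu _ Hr Hp Hnl.
have [[Hi Hj _ _] _] := Hmax.
have [H1 H2] := step HL Hp Hnl (inv HL Hs Hr _ Hp) Hmax.
case: Hrec => [[-> Hct ->]|[-> Hct ->]].
- have [Hb _] := trunc_ne (H1 Hct).
  by rewrite (promise_kept HL Hs _ _ _ (reached_l Hr Hp Hnl Hct) (child_sub Hp Hi)).
- have [Hb _] := trunc_ne (H2 Hct).
  by rewrite (promise_kept HL Hs _ _ _ (reached_r Hr Hp Hnl Hct) (child_sub Hp Hj)).
Qed.
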